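(* Let $w=w_1\cdots w_n$ be a word of length $n\ge 2$ using only two letters, such that $w_i\ne w_{n-i+1}$ for all $1\le i\le n$. Then $f(w)=2n$.
   Context: A word of length $n$ is a sequence $w=w_1w_2\cdots w_n$ of letters (symbols). Let $[n]=\{1,\dots,n\}$. An $n$-grid is a function $G:[n]^2\to\Sigma$, where $\Sigma$ is an arbitrary set of letters. The $i$th row of $G$ contains $w$ if $G(i,j)=w_j$ for all $1\le j\le n$, or $G(i,j)=w_{n-j+1}$ for all $1\le j\le n$. The $j$th column contains $w$ if $G(i,j)=w_i$ for all $i$, or $G(i,j)=w_{n-i+1}$ for all $i$. The main diagonal contains $w$ if $G(i,i)=w_i$ for all $i$ or $G(i,i)=w_{n-i+1}$ for all $i$; the anti-diagonal contains $w$ if $G(i,n-i+1)=w_i$ for all $i$ or $G(i,n-i+1)=w_{n-i+1}$ for all $i$. Let $f(w,G)$ be the number of the $2n+2$ lines ($n$ rows, $n$ columns, $2$ diagonals) of $G$ that contain $w$, and $f(w)=\max_G f(w,G)$ over all $n$-grids $G$. *)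

(* Defs.v *)
From mathcomp Require Import all_boot.
Set Implicit Arguments. Unset Strict Implicit. Unset Printing Implicit Defensive.

(* Indices are 0-based: position i : 'I_n corresponds to the paper's i+1,
   and the paper's n-i+1 corresponds to rev_ord i (value n-1-i). *)
Section Grid.
Variables (S : eqType) (n : nat).

Definition word := 'I_n -> S.
Definition grid := 'I_n -> 'I_n -> S.

Definition line_contains (w : word) (p : 'I_n -> S) : bool :=
  [forall j, p j == w j] || [forall j, p j == w (rev_ord j)].

Definition row_contains (w : word) (G : grid) (i : 'I_n) :=
  line_contains w (fun j => G i j).
Definition col_contains (w : word) (G : grid) (j : 'I_n) :=
  line_contains w (fun i => G i j).
Definition diag_contains (w : word) (G : grid) :=
  line_contains w (fun i => G i i).
Definition antidiag_contains (w : word) (G : grid) :=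
  line_contains w (fun i => G i (rev_ord i)).

Definition fwG (w : word) (G : grid) : nat :=
  #|[pred i | row_contains w G i]| + #|[pred j | col_contains w G j]|
  + diag_contains w G + antidiag_contains w G.

Definition f_is (w : word) (k : nat) : Prop :=
  (exists G : grid, fwG w G = k) /\ (forall G : grid, fwG w G <= k).

End Grid.

(* Main.v *)
Require Import Defs.
From mathcomp Require Import all_boot zify.
Set Implicit Arguments. Unset Strict Implicit.

Section Aux.
Variables (S : eqType) (m : nat) (w : 'I_m.+2 -> S) (a b : S).
Hypothesis hab : forall i, w i = a \/ w i = b.
Hypothesis hw : forall i : 'I_m.+2, w i != w (rev_ord i).

Lemma rev0 : rev_ord (ord0 : 'I_m.+2) = ord_max.
Proof. by apply/val_inj => /=; rewrite subn1. Qed.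
Lemma revN : rev_ord (ord_max : 'I_m.+2) = ord0.
Proof. by apply/val_inj => /=; rewrite subnn. Qed.

Lemma w0N : w ord0 != w ord_max.
Proof. by have := hw ord0; rewrite rev0. Qed.

Definition inab (x : S) := (x == a) || (x == b).

Lemma line_ends p : line_contains w p ->
  [&& p ord0 != p ord_max, inab (p ord0) & inab (p ord_max)].
Proof.
have iw : forall i, inab (w i) by move=> i; rewrite /inab; case: (hab i) => ->; rewrite eqxx ?orbT.
move=> Hl; have := w0N; case/orP: Hl => /forallP H; have /eqP -> := H ord0; have /eqP -> := H ord_max.
  by move=> ->; rewrite !iw.
by rewrite rev0 revN eq_sym => ->; rewrite !iw.
Qed.

Lemma tri x y z : x != y -> y != z -> x != z -> inab x -> inab y -> inab z -> False.
Proof.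
rewrite /inab => xy yz xz.
by case/orP=> /eqP ex; case/orP=> /eqP ey; case/orP=> /eqP ez;
 subst; rewrite ?eqxx in xy yz xz.
Qed.

Lemma card_bound (P : pred 'I_m.+2) :
  #|P| <= P ord0 + P ord_max + m.
Proof.
have ne : (ord_max : 'I_m.+2) != ord0 by [].
rewrite (cardD1 ord0) (cardD1 ord_max) !inE ne /= -addnA leq_add2l.
rewrite leq_add2l.
have h : #|[predD1 [predD1 predT & (ord0 : 'I_m.+2)] & ord_max]| = m.
  have := card_ord m.+2; rewrite (cardD1 ord0) (cardD1 ord_max) !inE ne /=.
  by rewrite add1n add1n => -[].
rewrite -[X in _ <= X]h; apply: subset_leq_card; apply/subsetP => x; rewrite !inE.
by case/andP => -> /andP [->].
Qed.

End Aux.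

Theorem proposition3 (S : eqType) (n : nat) (w : 'I_n -> S) :
  2 <= n ->
  (exists a b : S, forall i : 'I_n, w i = a \/ w i = b) ->
  (forall i : 'I_n, w i != w (rev_ord i)) ->
  f_is w (2 * n).
Proof.
case: n w => [|[|m]] w // _ [a [b hab]] hw.
have w0 := w0N hw.
have ab : a != b.
  apply: contraNneq w0 => eab; case: (hab ord0) => ->; case: (hab ord_max) => ->; by rewrite ?eab.
split.
  exists (fun i j => if w i == w j then a else b).
  have rowc : forall i, line_contains w (fun j => if w i == w j then a else b).
    move=> i; rewrite /line_contains; case: (hab i) => ->.
      apply/orP; left; apply/forallP => j.
      by case: (hab j) => ->; rewrite ?eqxx // ifN.
    apply/orP; right; apply/forallP => j.
    have := hw j; case: (hab j) => ->; case: (hab (rev_ord j)) => ->;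
      rewrite ?eqxx //; try (by rewrite ifN // eq_sym); try (by move=> /negP).
  have colc : forall j, line_contains w (fun i => if w i == w j then a else b).
    move=> j; rewrite /line_contains; case: (hab j) => ->.
      apply/orP; left; apply/forallP => i.
      by case: (hab i) => ->; rewrite ?eqxx // ifN // eq_sym.
    apply/orP; right; apply/forallP => i.
    have := hw i; case: (hab i) => ->; case: (hab (rev_ord i)) => ->;
      rewrite ?eqxx //; try (by rewrite ifN // eq_sym); try (by rewrite ifN); try (by move=> /negP).
  have d : diag_contains w (fun i j => if w i == w j then a else b) = false.
    rewrite /diag_contains /line_contains.
    apply/negbTE; rewrite negb_or; apply/andP; split; apply/negP => /forallP H.
      by have /eqP e0 := H ord0; have /eqP eN := H ord_max; rewrite !eqxx in e0 eN; rewrite -e0 -eN eqxx in w0.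
    by have /eqP e0 := H ord0; have /eqP eN := H ord_max; rewrite !eqxx rev0 revN in e0 eN;
      rewrite -e0 -eN eqxx in w0.
  have ad : antidiag_contains w (fun i j => if w i == w j then a else b) = false.
    rewrite /antidiag_contains /line_contains.
    have hb : forall i : 'I_m.+2, (if w i == w (rev_ord i) then a else b) = b.
      by move=> i; rewrite (negbTE (hw i)).
    apply/negbTE; rewrite negb_or; apply/andP; split; apply/negP => /forallP H.
      by have /eqP e0 := H ord0; have /eqP eN := H ord_max; rewrite !hb in e0 eN;
        rewrite -e0 -eN eqxx in w0.
    by have /eqP e0 := H ord0; have /eqP eN := H ord_max; rewrite !hb rev0 revN in e0 eN;
      rewrite -e0 -eN eqxx in w0.
  rewrite /fwG d ad !addn0.
  rewrite !eq_cardT ?size_enum_ord; first by rewrite mul2n -addnn.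
    by move=> j; rewrite inE; apply: colc.
  by move=> i; rewrite inE; apply: rowc.
move=> G; rewrite /fwG.
have rb := card_bound [pred i | row_contains w G i].
have cb := card_bound [pred j | col_contains w G j].
rewrite !inE in rb cb.
have L := line_ends hab hw.
pose E x y := [&& x != y, inab a b x & inab a b y].
have Esym : forall x y, E x y -> E y x.
  by move=> x y /and3P [h1 h2 h3]; rewrite /E eq_sym h1 h2 h3.
have T : forall x y z, E x y -> E y z -> E x z -> False.
  move=> x y z /and3P [h1 h2 h3] /and3P [h4 _ h6] /and3P [h7 _ _].
  exact: (tri h1 h4 h7 h2 h3 h6).
have hr0 : row_contains w G ord0 -> E (G ord0 ord0) (G ord0 ord_max) := L _.
have hrN : row_contains w G ord_max -> E (G ord_max ord0) (G ord_max ord_max) := L _.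
have hc0 : col_contains w G ord0 -> E (G ord0 ord0) (G ord_max ord0) := L _.
have hcN : col_contains w G ord_max -> E (G ord0 ord_max) (G ord_max ord_max) := L _.
have hd : diag_contains w G -> E (G ord0 ord0) (G ord_max ord_max) := L _.
have had : antidiag_contains w G -> E (G ord0 ord_max) (G ord_max ord0).
  by move=> h; have := L _ h; rewrite /= rev0 revN.
rewrite leqNgt; apply/negP => hlt.
set R := #|_| in rb hlt. set C := #|_| in cb hlt.
move: rb cb hlt hr0 hrN hc0 hcN hd had.
case: (row_contains w G ord0); case: (row_contains w G ord_max);
case: (col_contains w G ord0); case: (col_contains w G ord_max);
case: (diag_contains w G); case: (antidiag_contains w G) => /= rb cb hlt
  hr0 hrN hc0 hcN hd had; try lia.
all: first [ exact: (T _ _ _ (hr0 isT) (had isT) (hc0 isT))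
           | exact: (T _ _ _ (hr0 isT) (hcN isT) (hd isT))
           | exact: (T _ _ _ (hc0 isT) (hrN isT) (hd isT))
           | exact: (T _ _ _ (hrN isT) (Esym (hcN isT)) (Esym (had isT))) ].
Qed.
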